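(* Let $R$ be a ring and $\mathcal{L},\mathcal{K}$ classes of $R$-modules such that $\mathrm{Ext}^1_R(K,L)=0$ for all $K\in\mathcal{K}$, $L\in\mathcal{L}$, every projective module lies in $\mathcal{L}$, and $\mathcal{L}$ is closed under finite direct sums and kernels of epimorphisms. Let $f:M\to N$ be an $R$-linear map and let $0\to L\xrightarrow{\iota}K\xrightarrow{p}M\to0$ and $0\to L'\xrightarrow{\jmath}K'\xrightarrow{q}N\to0$ be exact sequences with $K,K'\in\mathcal{K}$ and $L,L'\in\mathcal{L}$. Then: (i) there exists an $R$-linear map $g:K\to K'$ with $qg=fp$; (ii) if $g,g':K\to K'$ are $R$-linear maps with $qg=fp=qg'$, then $[g]=[g']$ in $\mathfrak{L}\text{-}\mathrm{Hom}_R(K,K')$; (iii) if $[f]=[0]$ in $\mathfrak{L}\text{-}\mathrm{Hom}_R(M,N)$ and $g:K\to K'$ is an $R$-linear map with $qg=fp$, then $[g]=[0]$ in $\mathfrak{L}\text{-}\mathrm{Hom}_R(K,K')$.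
   Context: Modules are left $R$-modules. $\mathfrak{L}\text{-}\mathrm{Hom}_R(X,Y)$ denotes the quotient of $\mathrm{Hom}_R(X,Y)$ by the subgroup of $R$-linear maps factoring through a module in $\mathcal{L}$, and $[h]$ the class of a map $h$ therein. *)

(* Defs.v *)
(* modules over a ring R are MathComp's lmodType R (left modules). *)
From HB Require Import structures.
From mathcomp Require Import all_boot all_order all_algebra.
Set Implicit Arguments. Unset Strict Implicit. Unset Printing Implicit Defensive.
Import GRing.Theory.
Local Open Scope ring_scope.

Section ModDefs.
Variable R : pzRingType.

Definition short_exact (A B C : lmodType R)
  (i : {linear A -> B}) (p : {linear B -> C}) : Prop :=
  injective i /\ (forall c : C, exists b : B, p b = c) /\
  (forall b : B, p b = 0 <-> exists a : A, b = i a).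

Definition projective (P : lmodType R) : Prop :=
  forall (A B : lmodType R) (e : {linear A -> B}) (h : {linear P -> B}),
    (forall b : B, exists a : A, e a = b) ->
    exists l : {linear P -> A}, forall x, e (l x) = h x.

(* Ext^1_R(K, L) = 0, via Yoneda: every extension 0 -> L -> E -> K -> 0 splits. *)
Definition Ext1_zero (K L : lmodType R) : Prop :=
  forall (E : lmodType R) (i : {linear L -> E}) (pi : {linear E -> K}),
    short_exact i pi ->
    exists s : {linear K -> E}, forall x, pi (s x) = x.

Definition dsum_closed (C : lmodType R -> Prop) : Prop :=
  forall A B : lmodType R, C A -> C B -> C (A * B)%type.

(* closure under kernels of epimorphisms: if 0 -> A -> B -> D -> 0 is exact
   with B, D in the class then A is in the class (A is the kernel up to iso). *)
Definition ker_epi_closed (C : lmodType R -> Prop) : Prop :=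
  forall (A B D : lmodType R) (i : {linear A -> B}) (p : {linear B -> D}),
    short_exact i p -> C B -> C D -> C A.

(* [h] = [h'] in L-Hom_R(U,V): h - h' factors through a module of the class. *)
Definition LHom_eq (C : lmodType R -> Prop) (U V : lmodType R)
  (h h' : U -> V) : Prop :=
  exists X : lmodType R, C X /\
    exists (a : {linear U -> X}) (b : {linear X -> V}),
      forall x, h x - h' x = b (a x).
End ModDefs.

(* Main.v *)
Require Import Defs.
From HB Require Import structures.
From mathcomp Require Import all_boot all_order all_algebra.
From mathcomp Require Import finmap.
From mathcomp.multinomials Require Import monalg.
Set Implicit Arguments. Unset Strict Implicit. Unset Printing Implicit Defensive.
Import GRing.Theory.
Local Open Scope fset_scope.
Local Open Scope ring_scope.

Section Sub.
Variables (R : pzRingType) (V : lmodType R) (S : pred V) (H : subsemimod_closed S).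
Record subm (H' : subsemimod_closed S) := Subm { subm_val : V ; subm_mem : S subm_val }.
HB.instance Definition _ := [isSub for (@subm_val H)].
HB.instance Definition _ := [Choice of subm H by <:].
HB.instance Definition _ := GRing.SubChoice_isSubLmodule.Build R V S (subm H) H.
End Sub.

Section Free.
Variables (R : pzRingType) (X : choiceType).
Definition freem := malg X R.
HB.instance Definition _ := GRing.Zmodule.on freem.
Definition fscale (c : R) (g : freem) : freem := \sum_(k <- msupp g) << c * g@_k *g k >>.
Lemma fscaleE c g k : (fscale c g)@_k = c * g@_k.
Proof.
rewrite {2}[g]monalgE !raddf_sum mulr_sumr.
by apply/eq_bigr=> /= i _; rewrite !mcoeffU mulrnAr.
Qed.
Lemma fscaleA c1 c2 g : fscale c1 (fscale c2 g) = fscale (c1 * c2) g.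
Proof. by apply/malgP=> x; rewrite !fscaleE mulrA. Qed.
Lemma fscale1r g : fscale 1 g = g.
Proof. by apply/malgP=> k; rewrite !fscaleE mul1r. Qed.
Lemma fscaleDr c g1 g2 : fscale c (g1 + g2) = fscale c g1 + fscale c g2.
Proof. by apply/malgP=> k; rewrite !(mcoeffD, fscaleE) mulrDr. Qed.
Lemma fscaleDl g c1 c2: fscale (c1 + c2) g = fscale c1 g + fscale c2 g.
Proof. by apply/malgP=> x; rewrite !(mcoeffD, fscaleE) mulrDl. Qed.
HB.instance Definition _ := GRing.Zmodule_isLmodule.Build R freem
  fscaleA fscale1r fscaleDr fscaleDl.

Lemma fcoeffZ c (g : freem) k : (c *: g)@_k = c * g@_k.
Proof. exact: fscaleE. Qed.

Definition fext (V : lmodType R) (phi : X -> V) (g : freem) : V :=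
  \sum_(k <- msupp g) g@_k *: phi k.

Lemma fextEw (V : lmodType R) (phi : X -> V) (d : {fset X}) (g : freem) :
  msupp g `<=` d -> fext phi g = \sum_(k <- d) g@_k *: phi k.
Proof.
move=> le; rewrite /fext [LHS](big_fset_incl _ le) => //= x xd /mcoeff_outdom ->.
by rewrite scale0r.
Qed.

Lemma fext_lin (V : lmodType R) (phi : X -> V) : linear (fext phi).
Proof.
move=> a g h /=.
pose d := (msupp g `|` msupp h `|` msupp (a *: g + h))%fset.
have s1 : msupp g `<=` d by rewrite /d -fsetUA fsubsetUl.
have s2 : msupp h `<=` d by apply/fsubsetP => x hx; rewrite /d !inE hx !orbT.
have s3 : msupp (a *: g + h) `<=` d by rewrite /d fsubsetUr.
rewrite (fextEw _ s1) (fextEw _ s2) (fextEw _ s3) scaler_sumr -big_split /=.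
by apply: eq_bigr => k _; rewrite mcoeffD fcoeffZ scalerDl scalerA.
Qed.

Lemma fextU (V : lmodType R) (phi : X -> V) c k : fext phi << c *g k >> = c *: phi k.
Proof. by rewrite (fextEw _ msuppU_le) big_seq_fset1 mcoeffUU. Qed.

Lemma fscaleU c k : c *: (<< 1 *g k >> : freem) = << c *g k >>.
Proof. by apply/malgP => k'; rewrite fcoeffZ !mcoeffU mulr_natr. Qed.

Lemma fext_basis (g : freem) : fext (fun k => (<< 1 *g k >> : freem)) g = g.
Proof.
rewrite /fext [RHS]monalgE; apply: eq_bigr => k _; exact: fscaleU.
Qed.
End Free.

Section Main.
Variable R : pzRingType.

Definition mklin (U V : lmodType R) (f : U -> V) (H : linear f) : {linear U -> V} :=
  HB.pack f (GRing.isLinear.Build R U V *:%R f H).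

Lemma mklinE (U V : lmodType R) (f : U -> V) (H : linear f) x : mklin H x = f x.
Proof. by []. Qed.

Lemma freem_proj (X : choiceType) : projective (freem R X).
Proof.
move=> A B e h surj.
have ex k : exists a, e a == h << 1 *g k >>.
  by have [a ea] := surj (h << 1 *g k >>); exists a; apply/eqP.
pose a k := xchoose (ex k).
exists (mklin (fext_lin a)) => g; rewrite mklinE /fext linear_sum /=.
rewrite -[in RHS](fext_basis g) /fext linear_sum /=.
apply: eq_bigr => k _; rewrite !linearZ /=; congr (_ *: _).
exact/eqP/(xchooseP (ex k)).
Qed.

Definition fev (X : lmodType R) : freem R X -> X := fext (fun x : X => x).

Lemma fev_surj (X : lmodType R) (x : X) : exists g, fev g = x.
Proof. by exists << 1 *g x >>; rewrite /fev fextU scale1r. Qed.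

Lemma lift_lem (K Y Z W : lmodType R) (w : {linear W -> Y}) (e : {linear Y -> Z})
  (ex : short_exact w e) (hE : Ext1_zero K W) (h : {linear K -> Z}) :
  exists l : {linear K -> Y}, forall x, e (l x) = h x.
Proof.
case: ex => [winj [esurj eker]].
pose S : pred (K * Y)%type := fun x => h x.1 == e x.2.
have Sc : subsemimod_closed S.
  split; first split.
  - by rewrite unfold_in /= !linear0.
  - by move=> u v; rewrite !unfold_in /= => /eqP hu /eqP hv; rewrite !linearD hu hv.
  - by move=> a u; rewrite !unfold_in /= => /eqP hu; rewrite !linearZ hu.
pose E := @subm _ _ S Sc.
have wS a : S (0, w a).
  rewrite /S /= linear0; apply/eqP/esym/eker; by exists a.
pose i (a : W) : E := @Subm _ _ S Sc (0, w a) (wS a).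
have ilin : linear i.
  move=> c a b; apply/val_inj => /=.
  rewrite !linearP /=; apply: injective_projections => //=; by rewrite scaler0 addr0.
pose pi (x : E) : K := (subm_val x).1.
have pilin : linear pi by move=> c a b.
have sex : short_exact (mklin ilin) (mklin pilin).
  split; [|split].
  - move=> a b; rewrite !mklinE => /(congr1 (fun x : E => (subm_val x).2)) /=.
    exact: winj.
  - move=> k; rewrite /=; have [y ey] := esurj (h k).
    have Sy : S (k, y) by rewrite /S /= ey.
    by exists (@Subm _ _ S Sc (k, y) Sy).
  - move=> [[k y] Sy]; rewrite mklinE /pi /=; split.
    + move=> k0; have e0 : e y = 0 by rewrite -(eqP Sy) /= k0 linear0.
      have [a ya] := (eker y).1 e0.
      by exists a; apply/val_inj => /=; rewrite k0 ya.
    + by move=> [a /(congr1 (fun x : E => (subm_val x).1))].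
have [s hs] := hE E (mklin ilin) (mklin pilin) sex.
have llin : linear (fun x => (subm_val (s x)).2).
  by move=> c a b; rewrite linearP.
exists (mklin llin) => x; rewrite mklinE.
have := subm_mem (s x); rewrite /S => /eqP <-.
by have := hs x; rewrite mklinE /pi => ->.
Qed.
End Main.

Lemma diff_factor (R : pzRingType) (K K' N L' : lmodType R)
  (j : {linear L' -> K'}) (q : {linear K' -> N}) (ex2 : short_exact j q)
  (g g' : {linear K -> K'}) (hgg : forall x, q (g x) = q (g' x)) :
  exists h : {linear K -> L'}, forall x, g x - g' x = j (h x).
Proof.
case: ex2 => [jinj [_ qker]].
have ex x : exists l, j l == g x - g' x.
  have : q (g x - g' x) = 0 by rewrite linearB /= hgg subrr.
  by move/qker => [a ha]; exists a; rewrite ha.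
pose h x := xchoose (ex x).
have hE x : j (h x) = g x - g' x by apply/eqP/(xchooseP (ex x)).
have hlin : linear h.
  move=> c a b; apply: jinj; rewrite linearP /= !hE !linearP /=.
  by rewrite scalerBr addrACA scalerN.
by exists (mklin hlin) => x; rewrite mklinE hE.
Qed.

Lemma LHom_add (R : pzRingType) (LC : lmodType R -> Prop) (hsum : dsum_closed LC)
  (U V : lmodType R) (h1 h2 : U -> V) :
  LHom_eq LC h1 (fun _ => 0) -> LHom_eq LC h2 (fun _ => 0) ->
  LHom_eq LC (fun x => h1 x + h2 x) (fun _ => 0).
Proof.
move=> [X1 [C1 [a1 [b1 e1]]]] [X2 [C2 [a2 [b2 e2]]]].
exists (X1 * X2)%type; split; first exact: hsum.
have alin : linear (fun x => (a1 x, a2 x)).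
  by move=> c x y; rewrite !linearP.
have blin : linear (fun z : (X1 * X2)%type => b1 z.1 + b2 z.2).
  move=> c x y /=; rewrite !linearP /= scalerDr.
  by rewrite addrACA.
exists (mklin alin), (mklin blin) => x; rewrite !mklinE /= -e1 -e2 !subr0 //.
Qed.

Lemma ker_exact (R : pzRingType) (Y Z : lmodType R) (e : {linear Y -> Z})
  (esurj : forall z, exists y, e y = z) :
  exists (W : lmodType R) (w : {linear W -> Y}), short_exact w e.
Proof.
pose S : pred Y := fun y => e y == 0.
have Sc : subsemimod_closed S.
  split; first split.
  - by rewrite unfold_in /= !linear0.
  - by move=> u v; rewrite !unfold_in /= => /eqP hu /eqP hv; rewrite !linearD hu hv addr0.
  - by move=> a u; rewrite !unfold_in /= => /eqP hu; rewrite linearZ /= hu scaler0.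
pose W := @subm _ _ S Sc.
have vlin : linear (fun x : W => subm_val x) by move=> c a b.
exists W, (mklin vlin); split; [|split] => //.
- by move=> a b; rewrite !mklinE; apply: val_inj.
- move=> y; split.
  + by move=> /eqP ey; exists (@Subm _ _ S Sc y ey).
  + by move=> [a ->]; rewrite mklinE; apply/eqP; exact: (subm_mem a).
Qed.

Unset Implicit Arguments.
Theorem lemma3p1 (R : pzRingType) (LC KC : lmodType R -> Prop)
  (hExt : forall K L : lmodType R, KC K -> LC L -> Ext1_zero K L)
  (hproj : forall P : lmodType R, projective P -> LC P)
  (hsum : dsum_closed LC) (hker : ker_epi_closed LC)
  (M N K L K' L' : lmodType R) (f : {linear M -> N})
  (iota : {linear L -> K}) (p : {linear K -> M})
  (j : {linear L' -> K'}) (q : {linear K' -> N})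
  (ex1 : short_exact iota p) (ex2 : short_exact j q)
  (hK : KC K) (hK' : KC K') (hL : LC L) (hL' : LC L') :
  (exists g : {linear K -> K'}, forall x, q (g x) = f (p x)) /\
  (forall g g' : {linear K -> K'},
      (forall x, q (g x) = f (p x)) -> (forall x, q (g' x) = f (p x)) ->
      LHom_eq LC g g') /\
  (LHom_eq LC f (fun _ => 0) ->
   forall g : {linear K -> K'}, (forall x, q (g x) = f (p x)) ->
      LHom_eq LC g (fun _ => 0)).
Proof.
have fplin : linear (fun x => f (p x)) by move=> c a b; rewrite !linearP.
have part2 : forall g g' : {linear K -> K'},
    (forall x, q (g x) = q (g' x)) -> LHom_eq LC g g'.
  move=> g g' hgg; have [h hh] := diff_factor ex2 hgg.
  by exists L'; split => //; exists h, j.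
split.
  have [l hl] := lift_lem ex2 (hExt _ _ hK hL') (mklin fplin).
  by exists l => x; rewrite hl mklinE.
split.
  by move=> g g' hg hg'; apply: part2 => x; rewrite hg hg'.
move=> [X [CX [a [b hab]]]] g hg.
pose F := freem R X.
have CF : LC F by apply: hproj; exact: freem_proj.
pose ev := mklin (@fext_lin R X X (fun x : X => x)).
have evsurj : forall x : X, exists y : F, ev y = x.
  by move=> x; have [y hy] := fev_surj x; exists y.
have [W [w wex]] := ker_exact evsurj.
have CW : LC W by apply: (hker _ _ _ w ev).
have [c hc] := freem_proj (b \o ev) (proj1 (proj2 ex2)).
have aplin : linear (fun x => a (p x)) by move=> r u v; rewrite !linearP.
have [phi hphi] := lift_lem wex (hExt _ _ hK CW) (mklin aplin).
have g0lin : linear (fun x => c (phi x)) by move=> r u v; rewrite !linearP.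
have hg0 : forall x, q (mklin g0lin x) = f (p x).
  by move=> x; rewrite mklinE hc; change (b (ev (phi x)) = f (p x)); rewrite hphi mklinE -[f _]subr0 hab.
have [h hh] := diff_factor ex2 (fun x => etrans (hg x) (esym (hg0 x))).
have e1 : LHom_eq LC (fun x => g x - mklin g0lin x) (fun _ => 0).
  by exists L'; split => //; exists h, j => x; rewrite hh subr0.
have e2 : LHom_eq LC (mklin g0lin) (fun _ => 0).
  by exists F; split => //; exists phi, c => x; rewrite subr0.
have [Y [CY [a' [b' hY]]]] := LHom_add hsum e1 e2.
exists Y; split => //; exists a', b' => x; rewrite -hY.
by rewrite subrK.
Qed.
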